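(* Let $m,n\geq 0$ be integers. Then \[ \sum_{k=1}^{n}\frac{(-1)^k q^{\binom{k+1}{2}}}{(q;q)_k (q;q)_{n-k}(q^k;q)_{m+1}} -\sum_{k=1}^{m}\frac{(-1)^k q^{\binom{k+1}{2}}}{(q;q)_k (q;q)_{m-k}(q^k;q)_{n+1}} =\frac{1}{(q;q)_{m}(q;q)_{n}}\left(\sum_{k=1}^m\frac{q^k}{1-q^k}-\sum_{k=1}^n\frac{q^k}{1-q^k}\right). \]
   Context: For $N\geq 0$, $(x;q)_N=(1-x)(1-xq)\cdots(1-xq^{N-1})$ (with $(x;q)_0=1$). The identity is one of rational functions in $q$. *)

(* Defs.v *)
From HB Require Import structures.
From mathcomp Require Import all_boot all_order all_algebra.
From mathcomp Require Import fraction.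
Set Implicit Arguments. Unset Strict Implicit. Unset Printing Implicit Defensive.
Import GRing.Theory.
Local Open Scope ring_scope.

Definition qpoch (R : ringType) (x q : R) (N : nat) : R :=
  \prod_(i < N) (1 - x * q ^+ i).

Definition ratfun := {fraction {poly rat}}.
Definition qX : ratfun := tofrac ('X : {poly rat}).

(* Main.v *)
Require Import Defs.
From HB Require Import structures.
From mathcomp Require Import all_boot all_order all_algebra.
From mathcomp Require Import fraction.
From mathcomp Require Import ring.
Set Implicit Arguments. Unset Strict Implicit. Unset Printing Implicit Defensive.
Import GRing.Theory.
Local Open Scope ring_scope.

Definition qq_ok (R : fieldType) (q : R) := forall j : nat, (0 < j)%N -> 1 - q ^+ j != 0.

Definition ca (R : fieldType) (q : R) (n k : nat) : R :=
  (-1) ^+ k * q ^+ 'C(k.+1, 2) / (qpoch q q k * qpoch q q (n - k)).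

Lemma qpochS (R : fieldType) (x q : R) n :
  qpoch x q n.+1 = qpoch x q n * (1 - x * q ^+ n).
Proof. by rewrite /qpoch big_ord_recr. Qed.

Lemma qpochSl (R : fieldType) (x q : R) n :
  qpoch x q n.+1 = (1 - x) * qpoch (x * q) q n.
Proof.
rewrite /qpoch big_ord_recl expr0 mulr1; congr (_ * _).
by apply: eq_bigr => i _; rewrite exprS mulrA.
Qed.

Lemma P_neq0 (R : fieldType) (q : R) (hq : qq_ok q) n : qpoch q q n != 0.
Proof.
rewrite /qpoch; apply/prodf_neq0 => i _; rewrite -exprS; exact: hq.
Qed.

Lemma pasc1 (R : fieldType) (q : R) (hq : qq_ok q) m i : (i <= m)%N ->
  ca q m.+1 i * (1 - q ^+ (m.+1 - i)) = ca q m i.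
Proof.
move=> him; rewrite /ca subSn // qpochS -exprS.
have h1 := P_neq0 hq i; have h2 := P_neq0 hq (m - i).
have h3 : 1 - q ^+ (m - i).+1 != 0 by apply: hq.
field; rewrite h1 h2 h3 //.
Qed.

Lemma pasc2 (R : fieldType) (q : R) (hq : qq_ok q) m i :
  ca q m.+1 i.+1 * (1 - q ^+ i.+1) = - q ^+ i.+1 * ca q m i.
Proof.
rewrite /ca subSS qpochS -exprS binS bin1 exprD exprS.
have h1 := P_neq0 hq i; have h2 := P_neq0 hq (m - i).
have h3 : 1 - q ^+ i.+1 != 0 by apply: hq.
field; rewrite h1 h2 h3 //.
Qed.

Lemma pasc (R : fieldType) (q : R) (hq : qq_ok q) m i : (i <= m.+1)%N ->
  ca q m.+1 i * (1 - q ^+ m.+1) =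
  (if (i <= m)%N then ca q m i else 0) -
  q ^+ m.+1 * (if i is j.+1 then ca q m j else 0).
Proof.
move=> him.
have -> : 1 - q ^+ m.+1 = (1 - q ^+ (m.+1 - i)) + q ^+ (m.+1 - i) * (1 - q ^+ i).
  by rewrite mulrBr mulr1 -exprD subnK // addrA subrK.
rewrite mulrDr; congr (_ + _).
  case: ifP => h; first by rewrite pasc1.
  have -> : i = m.+1 by apply/eqP; rewrite eqn_leq him leqNgt ltnS h.
  by rewrite subnn expr0 subrr mulr0.
case: i him => [|j] him.
  by rewrite expr0 subrr !mulr0 oppr0.
rewrite mulrCA pasc2 // mulNr mulrN mulrA -exprD subnK //.
Qed.

Lemma PF (R : fieldType) (q : R) (hq : qq_ok q) m : forall w : R,
  (forall i, (i <= m)%N -> 1 - w * q ^+ i != 0) ->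
  \sum_(i < m.+1) ca q m i / (1 - w * q ^+ i) = (qpoch w q m.+1)^-1.
Proof.
elim: m => [|m IH] w hw.
  rewrite big_ord1 /ca /qpoch big_ord1 /= !expr0 !mulr1 /qpoch !big_ord0.
  by rewrite mulr1 divr1 mul1r.
have hm : 1 - q ^+ m.+1 != 0 by apply: hq.
apply: (mulIf hm).
rewrite big_distrl /=.
rewrite (eq_bigr (fun i : 'I_m.+2 =>
   ((if (i <= m)%N then ca q m i else 0) -
    q ^+ m.+1 * (if nat_of_ord i is j.+1 then ca q m j else 0)) / (1 - w * q ^+ i))); last first.
  move=> i _; rewrite mulrAC pasc //; exact: (ltn_ord i).
rewrite (eq_bigr (fun i : 'I_m.+2 =>
   (if (i <= m)%N then ca q m i else 0) / (1 - w * q ^+ i) -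
    q ^+ m.+1 * ((if nat_of_ord i is j.+1 then ca q m j else 0) / (1 - w * q ^+ i)))); last first.
  by move=> i _; rewrite mulrBl mulrA.
rewrite sumrB -mulr_sumr [X in X - _]big_ord_recr [X in _ - _ * X]big_ord_recl /= ltnn mul0r addr0 mul0r add0r.
rewrite (eq_bigr (fun i : 'I_m.+1 => ca q m i / (1 - w * q ^+ i))); last first.
  by move=> i _; rewrite /= -ltnS ltn_ord.
rewrite [X in _ - _ * X](eq_bigr (fun i : 'I_m.+1 => ca q m i / (1 - (w * q) * q ^+ i))); last first.
  by move=> i _; rewrite /bump /= add1n exprS mulrA.
rewrite IH; last by move=> i hi; apply: hw; exact: leqW.
rewrite IH; last by move=> i hi; rewrite -mulrA -exprS; apply: hw.
rewrite (qpochSl w) (qpochS (w * q)) qpochSl (qpochS (w * q)).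
have h0 : 1 - w != 0 by have := hw 0%N isT; rewrite expr0 mulr1.
have h1 : 1 - w * q * q ^+ m != 0 by rewrite -mulrA -exprS; apply: hw.
have h2 : qpoch (w * q) q m != 0.
  rewrite /qpoch; apply/prodf_neq0 => i _; rewrite -mulrA -exprS; apply: hw.
  by rewrite ltnS ltnW.
rewrite -mulrA -exprS.
rewrite -mulrA -exprS in h1.
field; rewrite h0 h1 h2 //.
Qed.

Lemma Lsum (R : fieldType) (q : R) (hq : qq_ok q) n :
  qpoch q q n * \sum_(i < n) ca q n i.+1 / (1 - q ^+ i.+1) =
  - \sum_(i < n) q ^+ i.+1 / (1 - q ^+ i.+1).
Proof.
elim: n => [|n IH]; first by rewrite !big_ord0 mulr0 oppr0.
have hm : 1 - q ^+ n.+1 != 0 by apply: hq.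
have E : (\sum_(i < n.+1) ca q n.+1 i.+1 / (1 - q ^+ i.+1)) * (1 - q ^+ n.+1) =
   \sum_(i < n) ca q n i.+1 / (1 - q ^+ i.+1) - q ^+ n.+1 / qpoch q q n.+1.
  rewrite big_distrl /=.
  rewrite (eq_bigr (fun i : 'I_n.+1 =>
     (if (i.+1 <= n)%N then ca q n i.+1 else 0) / (1 - q ^+ i.+1) -
      q ^+ n.+1 * (ca q n i / (1 - q * q ^+ i)))); last first.
    move=> i _; rewrite mulrAC pasc //.
    by rewrite mulrBl mulrA -exprS.
  rewrite sumrB -mulr_sumr [X in X - _]big_ord_recr /= ltnn mul0r addr0.
  rewrite (PF hq (w := q)); last by move=> i _; rewrite -exprS; apply: hq.
  congr (_ - _); apply: eq_bigr => i _; by rewrite /= ltn_ord.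
have hP := P_neq0 hq n.
have hs : \sum_(i < n.+1) ca q n.+1 i.+1 / (1 - q ^+ i.+1) =
   (\sum_(i < n) ca q n i.+1 / (1 - q ^+ i.+1) - q ^+ n.+1 / qpoch q q n.+1)
   / (1 - q ^+ n.+1).
  by rewrite -E mulfK.
rewrite hs [X in _ = - X]big_ord_recr /= opprD -IH !qpochS -exprS.
field; rewrite hP hm //.
Qed.

Lemma Sexp (R : fieldType) (q : R) (hq : qq_ok q) n m :
  \sum_(1 <= k < n.+1)
      ((-1) ^+ k * q ^+ 'C(k.+1, 2) /
        (qpoch q q k * qpoch q q (n - k) * qpoch (q ^+ k) q m.+1)) =
  (qpoch q q m)^-1 * \sum_(k < n) ca q n k.+1 / (1 - q ^+ k.+1) +
  \sum_(k < n) \sum_(i < m) ca q n k.+1 * ca q m i.+1 / (1 - q ^+ (k.+1 + i.+1)).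
Proof.
rewrite big_add1 /= big_mkord mulr_sumr -big_split /=.
apply: eq_bigr => k _.
rewrite invfM mulrA -/(ca q n k.+1).
rewrite -(PF hq (m := m) (w := q ^+ k.+1)); last first.
  by move=> i _; rewrite -exprD; apply: hq; rewrite addSn.
rewrite big_ord_recl /= mulrDr; congr (_ + _).
  rewrite /ca expr0 mulr1 subn0 /= expr0 mulr1 qpochS /qpoch big_ord0 !mul1r.
  by rewrite mulrCA.
rewrite mulr_sumr; apply: eq_bigr => i _.
by rewrite /bump /= add1n -exprD mulrA.
Qed.

Lemma main_abs (R : fieldType) (q : R) (hq : qq_ok q) (m n : nat) :
  \sum_(1 <= k < n.+1)
      ((-1) ^+ k * q ^+ 'C(k.+1, 2) /
        (qpoch q q k * qpoch q q (n - k) * qpoch (q ^+ k) q m.+1))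
  - \sum_(1 <= k < m.+1)
      ((-1) ^+ k * q ^+ 'C(k.+1, 2) /
        (qpoch q q k * qpoch q q (m - k) * qpoch (q ^+ k) q n.+1))
  = (qpoch q q m * qpoch q q n)^-1 *
    (\sum_(1 <= k < m.+1) (q ^+ k / (1 - q ^+ k))
     - \sum_(1 <= k < n.+1) (q ^+ k / (1 - q ^+ k))).
Proof.
rewrite !Sexp //.
have -> : \sum_(k < m) \sum_(i < n) ca q m k.+1 * ca q n i.+1 / (1 - q ^+ (k.+1 + i.+1))
   = \sum_(k < n) \sum_(i < m) ca q n k.+1 * ca q m i.+1 / (1 - q ^+ (k.+1 + i.+1)).
  rewrite exchange_big /=; apply: eq_bigr => i _; apply: eq_bigr => k _.
  by rewrite (mulrC (ca q m k.+1)) addnC.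
rewrite !(@big_add1 _ _ _ 0%N) /= !big_mkord.
have Ln := Lsum hq n; have Lm := Lsum hq m.
have hn := P_neq0 hq n; have hm := P_neq0 hq m.
have En : \sum_(k < n) ca q n k.+1 / (1 - q ^+ k.+1) =
   - (\sum_(i < n) q ^+ i.+1 / (1 - q ^+ i.+1)) / qpoch q q n.
  by rewrite -Ln [qpoch q q n * _]mulrC mulfK.
have Em : \sum_(k < m) ca q m k.+1 / (1 - q ^+ k.+1) =
   - (\sum_(i < m) q ^+ i.+1 / (1 - q ^+ i.+1)) / qpoch q q m.
  by rewrite -Lm [qpoch q q m * _]mulrC mulfK.
rewrite En Em.
field; rewrite hn hm //.
Qed.

Lemma qX_ok : qq_ok qX.
Proof.
move=> j hj.
rewrite /qX -tofracXn -tofrac1 -tofracB tofrac_eq0 subr_eq0.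
apply/negP => /eqP h; have := congr1 (fun p : {poly rat} => size p) h.
rewrite size_polyXn size_poly1 => -[] hj0.
by rewrite -hj0 in hj.
Qed.

Theorem corollary6p3 (m n : nat) :
  let q := qX in
  \sum_(1 <= k < n.+1)
      ((-1) ^+ k * q ^+ 'C(k.+1, 2) /
        (qpoch q q k * qpoch q q (n - k) * qpoch (q ^+ k) q m.+1))
  - \sum_(1 <= k < m.+1)
      ((-1) ^+ k * q ^+ 'C(k.+1, 2) /
        (qpoch q q k * qpoch q q (m - k) * qpoch (q ^+ k) q n.+1))
  = (qpoch q q m * qpoch q q n)^-1 *
    (\sum_(1 <= k < m.+1) (q ^+ k / (1 - q ^+ k))
     - \sum_(1 <= k < n.+1) (q ^+ k / (1 - q ^+ k))).
Proof. exact: (main_abs qX_ok). Qed.
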